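(* For every positive integer $n$ there exists a nearly finitary matroid $M$ whose finitarization spectrum $\mathrm{Spec}(M)$ is a finite set with $|\mathrm{Spec}(M)|\ge n$. (That is, there exist nearly finitary matroids with finitarization spectrum of arbitrarily large finite size.)
   Context: A matroid $M=(E,\mathcal{L})$ consists of a (possibly infinite) set $E$ and a family $\mathcal{L}\subseteq 2^E$ of independent sets such that: (I1) $\emptyset\in\mathcal{L}$; (I2) subsets of independent sets are independent; (I3) if $B$ is a maximal element of $\mathcal{L}$ and $A\in\mathcal{L}$ is not maximal, there is $b\in B\setminus A$ with $A\cup\{b\}\in\mathcal{L}$; (I4) if $A\in\mathcal{L}$ and $A\subseteq X\subseteq E$, then $\{S\in\mathcal{L}: A\subseteq S\subseteq X\}$ has a maximal element. Bases are maximal independent sets. The finitarization $M^{\mathrm{fin}}=(E,\mathcal{L}^{\mathrm{fin}})$ has as independent sets all $S\subseteq E$ whose finite subsets all lie in $\mathcal{L}$; it is a matroid. $M$ is nearly finitary if whenever a base $F$ of $M^{\mathrm{fin}}$ contains a base $B$ of $M$, the set $F\setminus B$ is finite. The finitarization spectrum is $\mathrm{Spec}(M)=\{|F\setminus B| : B\subseteq F,\ F \text{ a base of } M^{\mathrm{fin}},\ B \text{ a base of } M\}$, where all infinite cardinalities are identified with a single value $\infty$. *)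

(* Defs.v *)
From Stdlib Require Import List.
Import ListNotations.

Definition subset {E : Type} (A B : E -> Prop) : Prop := forall x, A x -> B x.

Definition finite_set {E : Type} (A : E -> Prop) : Prop :=
  exists l : list E, forall x, A x -> In x l.

Definition has_card {E : Type} (A : E -> Prop) (k : nat) : Prop :=
  exists l : list E, NoDup l /\ length l = k /\ (forall x, A x <-> In x l).

Definition maximal_in {E : Type} (L : (E -> Prop) -> Prop) (B : E -> Prop) : Prop :=
  L B /\ forall S, L S -> subset B S -> subset S B.

Definition is_matroid {E : Type} (L : (E -> Prop) -> Prop) : Prop :=
  L (fun _ => False) /\
  (forall A B, L B -> subset A B -> L A) /\
  (forall A B, maximal_in L B -> L A -> ~ maximal_in L A ->
                exists b, B b /\ ~ A b /\ L (fun x => A x \/ x = b)) /\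
  (forall A X, L A -> subset A X ->
                exists S, (L S /\ subset A S /\ subset S X) /\
                  forall S', L S' -> subset A S' -> subset S' X ->
                             subset S S' -> subset S' S).

Definition fin_indep {E : Type} (L : (E -> Prop) -> Prop) (S : E -> Prop) : Prop :=
  forall T, subset T S -> finite_set T -> L T.

Definition setminus {E : Type} (F B : E -> Prop) : E -> Prop := fun x => F x /\ ~ B x.

Definition nearly_finitary {E : Type} (L : (E -> Prop) -> Prop) : Prop :=
  forall F B, maximal_in (fin_indep L) F -> maximal_in L B -> subset B F ->
    finite_set (setminus F B).

(* Spectrum: values in option nat, None standing for the single value "infinity". *)
Definition spec {E : Type} (L : (E -> Prop) -> Prop) (v : option nat) : Prop :=
  exists F B, maximal_in (fin_indep L) F /\ maximal_in L B /\ subset B F /\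
    match v with
    | Some k => has_card (setminus F B) k
    | None => ~ finite_set (setminus F B)
    end.

(* Main.v *)
Require Import Defs.
From Stdlib Require Import List Arith Lia Classical FinFun.
Import ListNotations.

Inductive El := mkE (c i : nat) (t : bool).

Definition add (Y : El -> Prop) (x : El) : El -> Prop := fun y => Y y \/ y = x.

Definition L0 (n : nat) (Y : El -> Prop) := forall c i t, Y (mkE c i t) -> c < n.
Definition La (Y : El -> Prop) := forall c i j, i < j -> Y (mkE c i true) -> Y (mkE c j true) ->
  exists k, i <= k < j /\ ~ Y (mkE c k false).
Definition Lb (Y : El -> Prop) := forall c i, Y (mkE c i true) ->
  exists k, i <= k /\ ~ Y (mkE c k false).
Definition Lf (n : nat) (Y : El -> Prop) : Prop := L0 n Y /\ La Y /\ Lb Y.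

Definition conn (Y : El -> Prop) c p q := forall k, (p <= k < q \/ q <= k < p) -> Y (mkE c k false).
Definition hub (Y : El -> Prop) c q :=
  (exists p, Y (mkE c p true) /\ conn Y c p q) \/ (forall k, q <= k -> Y (mkE c k false)).

Lemma exists_min : forall P : nat -> Prop, (exists k, P k) ->
  exists g, P g /\ forall k, k < g -> ~ P k.
Proof.
  intros P [k Hk]. revert Hk. induction k as [k IH] using Wf_nat.lt_wf_ind. intros Hk.
  destruct (classic (exists j, j < k /\ P j)) as [[j [Hj Pj]]|N].
  - apply (IH j Hj Pj).
  - exists k. split; auto. intros j Hj Pj. apply N; eauto.
Qed.

Lemma not_conn Y c p q : ~ conn Y c p q ->
  exists k, (p <= k < q \/ q <= k < p) /\ ~ Y (mkE c k false).
Proof.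
  intros H. apply NNPP; intro H0. apply H. intros k Hk. apply NNPP; intro. apply H0; eauto.
Qed.

Lemma conn_sym Y c p q : conn Y c p q -> conn Y c q p.
Proof. intros H k Hk. apply H. lia. Qed.

Lemma conn_trans Y c a b d : conn Y c a b -> conn Y c b d -> conn Y c a d.
Proof.
  intros H1 H2 k Hk.
  destruct (le_lt_dec b k), (le_lt_dec a k).
  - apply H2; lia.
  - apply H1; lia.
  - apply H1; lia.
  - apply H2; lia.
Qed.

Lemma H_mono (Y T : El -> Prop) c q : (forall x, Y x -> T x) -> hub Y c q -> hub T c q.
Proof.
  intros HYT [[p [Hp Hc]]|He].
  - left. exists p. split; auto. intros k Hk; auto.
  - right. intros k Hk; auto.
Qed.

Lemma H_conn Y c i j : conn Y c i j -> hub Y c j -> hub Y c i.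
Proof.
  intros Hij [[p [Hp Hc]]|He].
  - left. exists p. split; auto. apply (conn_trans _ _ _ j); auto. apply conn_sym; auto.
  - right. intros k Hk. destruct (le_lt_dec j k); [auto | apply Hij; lia].
Qed.

Lemma H_triv Y c q : Y (mkE c q true) -> hub Y c q.
Proof. intros H. left. exists q. split; auto. intros k Hk; lia. Qed.

Lemma H_step Y c k : Y (mkE c k false) -> (hub Y c k <-> hub Y c (S k)).
Proof.
  intros H. split; apply H_conn; intros m Hm; replace m with k by lia; exact H.
Qed.

Lemma prop_range Y c lo hi : lo <= hi ->
  (forall k, lo <= k < hi -> (hub Y c k <-> hub Y c (S k))) -> (hub Y c lo <-> hub Y c hi).
Proof.
  induction hi; intros Hle H.
  - assert (lo = 0) by lia. subst. tauto.
  - destruct (Nat.eq_dec lo (S hi)). subst; tauto.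
    rewrite IHhi by (try lia; intros; apply H; lia). apply H. lia.
Qed.

Lemma L_sub n (Y T : El -> Prop) : Lf n T -> (forall x, Y x -> T x) -> Lf n Y.
Proof.
  intros [H0 [Ha Hb]] HYT. split; [|split].
  - intros c i t H. eauto.
  - intros c i j Hij Hi Hj. destruct (Ha c i j Hij (HYT _ Hi) (HYT _ Hj)) as [k [Hk Hn]].
    exists k. split; auto.
  - intros c i Hi. destruct (Hb c i (HYT _ Hi)) as [k [Hk Hn]]. exists k. split; auto.
Qed.

Lemma dep_rung n Y c q : Lf n Y -> ~ Y (mkE c q true) -> hub Y c q ->
  ~ Lf n (add Y (mkE c q true)).
Proof.
  intros HY Hq Hh [_ [Ha Hb]]. destruct Hh as [[p [Hp Hc]] | He].
  - assert (p <> q) by (intro; subst; auto). destruct (lt_dec p q).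
    + destruct (Ha c p q l (or_introl Hp) (or_intror eq_refl)) as [k [Hk Hn]].
      apply Hn. left. apply Hc. lia.
    + destruct (Ha c q p ltac:(lia) (or_intror eq_refl) (or_introl Hp)) as [k [Hk Hn]].
      apply Hn. left. apply Hc. lia.
  - destruct (Hb c q (or_intror eq_refl)) as [k [Hk Hn]]. apply Hn. left. auto.
Qed.

Lemma dep_sp n Y c k : Lf n Y -> ~ Y (mkE c k false) -> hub Y c k -> hub Y c (S k) ->
  ~ Lf n (add Y (mkE c k false)).
Proof.
  intros HY Hk H1 H2 [_ [Ha Hb]].
  destruct H1 as [[p [Hp Hc]] | He]; [| apply Hk, He; lia].
  assert (p <= k). { destruct (le_lt_dec p k); auto. exfalso; apply Hk, Hc; lia. }
  destruct H2 as [[q [Hq Hc']] | He'].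
  - assert (S k <= q). { destruct (le_lt_dec (S k) q); auto. exfalso; apply Hk, Hc'; lia. }
    destruct (Ha c p q ltac:(lia) (or_introl Hp) (or_introl Hq)) as [m [Hm Hn]].
    apply Hn. destruct (Nat.eq_dec m k). subst; right; reflexivity. left.
    destruct (lt_dec m k); [apply Hc; lia | apply Hc'; lia].
  - destruct (Hb c p (or_introl Hp)) as [m [Hm Hn]]. apply Hn.
    destruct (Nat.eq_dec m k). subst; right; reflexivity. left.
    destruct (lt_dec m k); [apply Hc; lia | apply He'; lia].
Qed.

Lemma indep_rung n Y c q : Lf n Y -> c < n -> ~ hub Y c q -> Lf n (add Y (mkE c q true)).
Proof.
  intros [H0 [Ha Hb]] Hc Hh. split; [|split].
  - intros c' i t [H|H]; [eauto| injection H; intros; subst; auto].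
  - intros c' i j Hij Hi Hj.
    destruct Hi as [Hi|Hi]; destruct Hj as [Hj|Hj].
    + destruct (Ha _ _ _ Hij Hi Hj) as [k [Hk Hn]]. exists k; split; auto.
      intros [H|H]; [auto| discriminate].
    + injection Hj; intros; subst.
      assert (~ conn Y c i q) by (intro; apply Hh; left; exists i; auto).
      destruct (not_conn _ _ _ _ H) as [k [Hk Hn]]. exists k; split; [lia|].
      intros [H'|H']; [auto|discriminate].
    + injection Hi; intros; subst.
      assert (~ conn Y c j q) by (intro; apply Hh; left; exists j; auto).
      destruct (not_conn _ _ _ _ H) as [k [Hk Hn]]. exists k; split; [lia|].
      intros [H'|H']; [auto|discriminate].
    + injection Hi; injection Hj; intros; subst; lia.
  - intros c' i [Hi|Hi].
    + destruct (Hb _ _ Hi) as [k [Hk Hn]]; exists k; split; auto.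
      intros [H|H]; [auto|discriminate].
    + injection Hi; intros; subst.
      assert (~ forall k, q <= k -> Y (mkE c k false)) by (intro; apply Hh; right; auto).
      apply NNPP; intro Hno. apply H. intros k Hk. apply NNPP; intro Hn. apply Hno.
      exists k. split; auto. intros [H'|H']; [auto|discriminate].
Qed.

Lemma indep_sp n Y c k : Lf n Y -> c < n -> ~ Y (mkE c k false) ->
  ~ (hub Y c k /\ hub Y c (S k)) -> Lf n (add Y (mkE c k false)).
Proof.
  intros [H0 [Ha Hb]] Hc Hk Hh. split; [|split].
  - intros c' i t [H|H]; [eauto| injection H; intros; subst; auto].
  - intros c' i j Hij [Hi|Hi] [Hj|Hj]; try discriminate.
    apply NNPP; intro Hno.
    assert (Hall : forall m, i <= m < j -> add Y (mkE c k false) (mkE c' m false)).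
    { intros m Hm. apply NNPP; intro. apply Hno; eauto. }
    destruct (Ha _ _ _ Hij Hi Hj) as [g [Hg Hn]].
    destruct (Hall g Hg) as [H|H]; [contradiction|]. injection H; intros; subst.
    apply Hh. split.
    + left. exists i. split; auto. intros m Hm.
      destruct (Hall m ltac:(lia)) as [H'|H']; auto. injection H'; intros; lia.
    + left. exists j. split; auto. intros m Hm.
      destruct (Hall m ltac:(lia)) as [H'|H']; auto. injection H'; intros; lia.
  - intros c' i [Hi|Hi]; try discriminate.
    apply NNPP; intro Hno.
    assert (Hall : forall m, i <= m -> add Y (mkE c k false) (mkE c' m false)).
    { intros m Hm. apply NNPP; intro. apply Hno; eauto. }
    destruct (Hb _ _ Hi) as [g [Hg Hn]].
    destruct (Hall g Hg) as [H|H]; [contradiction|]. injection H; intros; subst.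
    apply Hh. split.
    + left. exists i. split; auto. intros m Hm.
      destruct (Hall m ltac:(lia)) as [H'|H']; auto. injection H'; intros; lia.
    + right. intros m Hm.
      destruct (Hall m ltac:(lia)) as [H'|H']; auto. injection H'; intros; lia.
Qed.
Lemma I3_fan n : forall A B, maximal_in (Lf n) B -> Lf n A -> ~ maximal_in (Lf n) A ->
  exists b, B b /\ ~ A b /\ Lf n (fun x => A x \/ x = b).
Proof.
  intros A B HB HA HnA.
  assert (Hex : exists a, ~ A a /\ Lf n (add A a)).
  { apply NNPP; intro H. apply HnA. split; auto. intros T HT Hsub x Hx.
    apply NNPP; intro Hnx. apply H. exists x. split; auto.
    apply (L_sub n _ T HT). intros y [Hy|Hy]; [apply Hsub; auto| subst; auto]. }
  destruct Hex as [[c i t] [Ha' HLa]].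
  apply NNPP; intro Hno.
  assert (Hc : c < n) by (apply (proj1 HLa c i t); right; reflexivity).
  destruct HB as [HBL HBm].
  assert (HBall : forall j, hub B c j).
  { intro j. apply NNPP; intro Hh.
    assert (HBr : ~ B (mkE c j true)) by (intro; apply Hh; apply H_triv; auto).
    apply HBr. apply (HBm (add B (mkE c j true))).
    - apply indep_rung; auto.
    - intros y Hy; left; auto.
    - right; reflexivity. }
  assert (Hboth : forall k, B (mkE c k false) -> ~ A (mkE c k false) ->
            hub A c k /\ hub A c (S k)).
  { intros k Hk Hnk. apply NNPP; intro H. apply Hno. exists (mkE c k false).
    split; auto. split; auto. apply indep_sp; auto. }
  assert (Hstep : forall k, B (mkE c k false) -> (hub A c k <-> hub A c (S k))).
  { intros k Hk. destruct (classic (A (mkE c k false))).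
    - apply H_step; auto.
    - destruct (Hboth k Hk H). tauto. }
  assert (Hrung : forall p, B (mkE c p true) -> hub A c p).
  { intros p Hp. destruct (classic (A (mkE c p true))).
    - apply H_triv; auto.
    - apply NNPP; intro. apply Hno. exists (mkE c p true); split; [auto|split; [auto|]].
      apply indep_rung; auto. }
  assert (HAall : forall j, hub A c j).
  { intro j. destruct (HBall j) as [[p [Hp Hcn]] | He].
    - destruct (le_lt_dec p j).
      + apply (prop_range A c p j l); [intros k Hk; apply Hstep; apply Hcn; lia | apply Hrung; auto].
      + apply (prop_range A c j p ltac:(lia)); [intros k Hk; apply Hstep; apply Hcn; lia | apply Hrung; auto].
    - destruct (classic (exists k, j <= k /\ ~ A (mkE c k false))) as [[k [Hk Hnk]] | Hall].
      + apply (prop_range A c j k Hk); [intros m Hm; apply Hstep; apply He; lia |].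
        apply (Hboth k (He k Hk) Hnk).
      + right. intros k Hk. apply NNPP; intro; apply Hall; eauto. }
  destruct t.
  - apply (dep_rung n A c i HA Ha' (HAall i) HLa).
  - apply (dep_sp n A c i HA Ha' (HAall i) (HAall (S i)) HLa).
Qed.

Section I4.
Variable n : nat.
Variables A X : El -> Prop.
Hypothesis HA : Lf n A.
Hypothesis HAX : forall x, A x -> X x.

Definition RD c v := exists m, v <= m /\ ~ X (mkE c m false) /\
  forall j, v <= j <= m -> ~ hub A c j /\ (j < m -> X (mkE c j false)).

Definition S1 : El -> Prop := fun x => A x \/
  match x with
  | mkE c k false => c < n /\ X (mkE c k false) /\ (~ hub A c k \/ RD c (S k))
  | mkE _ _ true => False
  end.

Definition S2 : El -> Prop := fun x => S1 x \/
  match x with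
  | mkE c q true => c < n /\ X (mkE c q true) /\ ~ hub S1 c q /\
      (forall q', q' < q -> conn S1 c q' q -> ~ X (mkE c q' true))
  | mkE _ _ false => False
  end.

Lemma S1_X x : S1 x -> X x.
Proof. intros [H|H]; auto. destruct x as [c i [|]]; [contradiction| tauto]. Qed.

Lemma S1_rung c i : S1 (mkE c i true) -> A (mkE c i true).
Proof. intros [H|H]; auto. contradiction. Qed.

Lemma S2_sp c k : S2 (mkE c k false) -> S1 (mkE c k false).
Proof. intros [H|H]; auto. contradiction. Qed.

Lemma gap_S1 c p g : A (mkE c p true) -> p <= g -> ~ A (mkE c g false) ->
  (forall k, p <= k < g -> A (mkE c k false)) ->
  exists m, g <= m /\ ~ S1 (mkE c m false) /\ forall q, g < q -> A (mkE c q true) -> m < q.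
Proof.
  intros Hp Hpg Hg Hk.
  assert (Hh : hub A c g) by (left; exists p; split; auto; intros k Hk'; apply Hk; lia).
  destruct (classic (RD c (S g))) as [[m [Hm [HnX Hall]]]|HnR].
  - exists m. split; [lia|]. split.
    + intro H. apply HnX. apply (S1_X _ H).
    + intros q Hq HAq. destruct (le_lt_dec q m); auto.
      exfalso. apply (proj1 (Hall q ltac:(lia))). apply H_triv; auto.
  - exists g. split; auto. split.
    + intros [H|H]; [contradiction|]. destruct H as [_ [_ [H|H]]]; contradiction.
    + intros; lia.
Qed.

Lemma first_gap c p : (exists k, p <= k /\ ~ A (mkE c k false)) ->
  exists g, p <= g /\ ~ A (mkE c g false) /\ (forall k, p <= k < g -> A (mkE c k false)).
Proof.
  intros Hex.
  destruct (exists_min (fun k => p <= k /\ ~ A (mkE c k false)) Hex) as [g [[Hg1 Hg2] Hmin]].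
  exists g. split; auto. split; auto. intros k Hk. apply NNPP; intro. apply (Hmin k); [lia|]. split; auto; lia.
Qed.

Lemma S1_indep : Lf n S1.
Proof.
  destruct HA as [H0 [Ha Hb]]. split; [|split].
  - intros c i t [H|H]; [eauto|]. destruct t; [contradiction| tauto].
  - intros c i j Hij Hi Hj. apply S1_rung in Hi. apply S1_rung in Hj.
    destruct (Ha _ _ _ Hij Hi Hj) as [k [Hk Hn]].
    destruct (first_gap c i ltac:(exists k; split; [lia|auto])) as [g [Hg1 [Hg2 Hg3]]].
    assert (g <= k). { destruct (le_lt_dec g k); auto. exfalso; apply Hn, Hg3; lia. }
    destruct (gap_S1 c i g Hi Hg1 Hg2 Hg3) as [m [Hm [Hn' Hq]]].
    exists m. split; auto. split; [lia|]. apply Hq; auto; lia.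
  - intros c i Hi. apply S1_rung in Hi.
    destruct (Hb _ _ Hi) as [k [Hk Hn]].
    destruct (first_gap c i ltac:(exists k; split; [lia|auto])) as [g [Hg1 [Hg2 Hg3]]].
    destruct (gap_S1 c i g Hi Hg1 Hg2 Hg3) as [m [Hm [Hn' Hq]]].
    exists m. split; [lia|auto].
Qed.

Lemma S2_indep : Lf n S2.
Proof.
  destruct S1_indep as [H0 [Ha Hb]]. split; [|split].
  - intros c i t [H|H]; [eauto|]. destruct t; [tauto| contradiction].
  - intros c i j Hij Hi Hj.
    assert (Hnc : ~ conn S1 c i j).
    { destruct Hi as [Hi|[_ [HXi [Hhi _]]]]; destruct Hj as [Hj|[_ [_ [Hhj Hmj]]]].
      - destruct (Ha _ _ _ Hij Hi Hj) as [k [Hk Hn]]. intro Hc. apply Hn, Hc. lia.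
      - intro Hc. apply Hhj. left. exists i. split; auto.
      - intro Hc. apply Hhi. left. exists j. split; auto. apply conn_sym; auto.
      - intro Hc. apply (Hmj i Hij Hc HXi). }
    destruct (not_conn _ _ _ _ Hnc) as [k [Hk Hn]]. exists k. split; [lia|].
    intro H. apply Hn. apply S2_sp; auto.
  - intros c i [Hi|[_ [_ [Hhi _]]]].
    + destruct (Hb _ _ Hi) as [k [Hk Hn]]. exists k. split; auto.
      intro H; apply Hn, S2_sp; auto.
    + apply NNPP; intro Hno. apply Hhi. right. intros k Hk. apply NNPP; intro Hn.
      apply Hno. exists k. split; auto. intro H; apply Hn, S2_sp; auto.
Qed.

Lemma S2_max x : X x -> ~ S2 x -> ~ Lf n (add S2 x).
Proof.
  destruct x as [c i t]. intros HX HnS HL.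
  destruct (le_lt_dec n c).
  { assert (c < n) by (apply (proj1 HL c i t); right; reflexivity). lia. }
  assert (HS12 : forall y, S1 y -> S2 y) by (intros y Hy; left; auto).
  assert (HAS1 : forall y, A y -> S1 y) by (intros y Hy; left; auto).
  destruct t.
  - assert (Hh : hub S2 c i).
    { destruct (classic (hub S1 c i)) as [Hh|Hh]; [apply (H_mono S1); auto|].
      assert (Hex : exists q', q' < i /\ conn S1 c q' i /\ X (mkE c q' true)).
      { apply NNPP; intro Hne. apply HnS. right. repeat split; auto.
        intros q' Hq' Hc HX'. apply Hne; eauto. }
      destruct (exists_min _ Hex) as [q0 [[Hq0 [Hc0 HX0]] Hmin]].
      assert (HS2q : S2 (mkE c q0 true)).
      { right. repeat split; auto.
        - intro Hh0. apply Hh. apply (H_conn _ _ _ q0); auto. apply conn_sym; auto.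
        - intros q'' Hq'' Hc'' HX''. apply (Hmin q'' Hq''). split; [lia|]. split; auto.
          apply (conn_trans _ _ _ q0); auto. }
      left. exists q0. split; auto. intros k Hk. left. apply Hc0; auto. }
    apply (dep_rung n S2 c i S2_indep HnS Hh HL).
  - assert (HnS1 : ~ S1 (mkE c i false)) by (intro; apply HnS; left; auto).
    assert (HnA : ~ A (mkE c i false)) by (intro; apply HnS1; left; auto).
    assert (HhA : hub A c i).
    { apply NNPP; intro. apply HnS1. right. auto. }
    assert (HnR : ~ RD c (S i)).
    { intro. apply HnS1. right. auto. }
    assert (Hh1 : hub S2 c (S i)).
    { destruct (classic (exists j, S i <= j /\ (hub A c j \/ ~ X (mkE c j false)))) as [Hex|Hne].
      - destruct (exists_min _ Hex) as [j0 [[Hj0 Hj0'] Hmin]].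
        assert (Hbelow : forall j, S i <= j < j0 -> ~ hub A c j /\ X (mkE c j false)).
        { intros j Hj. split.
          - intro. apply (Hmin j ltac:(lia)). split; [lia|]. left; auto.
          - apply NNPP; intro. apply (Hmin j ltac:(lia)). split; [lia|]. right; auto. }
        assert (Hcn : conn S2 c (S i) j0).
        { intros k Hk. left. right. destruct (Hbelow k ltac:(lia)) as [H1 H2].
          repeat split; auto. }
        destruct (classic (hub A c j0)) as [HA0|HA0].
        + apply (H_conn _ _ _ j0); auto. apply (H_mono A); auto.
        + exfalso. apply HnR. exists j0. split; auto. split.
          * destruct Hj0'; [contradiction|auto].
          * intros j Hj. destruct (Nat.eq_dec j j0).
            -- subst. split; auto. intros; lia.
            -- destruct (Hbelow j ltac:(lia)). split; auto.
      - right. intros k Hk. left. right. split; [auto|split].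
        + apply NNPP; intro. apply Hne. exists k. split; auto.
        + left. intro. apply Hne. exists k. split; auto. }
    apply (dep_sp n S2 c i S2_indep HnS (H_mono A S2 c i (fun y Hy => HS12 y (HAS1 y Hy)) HhA) Hh1 HL).
Qed.

Lemma S2_props : (Lf n S2 /\ subset A S2 /\ subset S2 X) /\
  forall S', Lf n S' -> subset A S' -> subset S' X -> subset S2 S' -> subset S' S2.
Proof.
  split; [split; [apply S2_indep| split]|].
  - intros x Hx. left; left; auto.
  - intros [c i t] [H|H]; [apply S1_X; auto|]. destruct t; [tauto|contradiction].
  - intros S' HS' HAS' HS'X HS2S' x Hx. apply NNPP; intro Hn.
    apply (S2_max x (HS'X x Hx) Hn). apply (L_sub n _ S' HS').
    intros y [Hy|Hy]; [auto| subst; auto].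
Qed.

End I4.

Lemma fan_matroid n : is_matroid (Lf n).
Proof.
  split; [|split; [|split]].
  - split; [|split]; intros c i; try intros t; intros; contradiction.
  - intros A B HB HAB. apply (L_sub n A B HB HAB).
  - apply I3_fan.
  - intros A X HA HAX. exists (S2 n A X). apply S2_props; auto.
Qed.

Definition idx (x : El) := match x with mkE _ i _ => i end.
Definition comp (x : El) := match x with mkE c _ _ => c end.

Lemma fin_to_La n F : fin_indep (Lf n) F -> L0 n F /\ La F.
Proof.
  intros HF. split.
  - intros c i t H.
    assert (HT : Lf n (fun y => y = mkE c i t)).
    { apply HF. intros y Hy; subst; auto. exists [mkE c i t]. intros y Hy; subst; left; auto. }
    apply (proj1 HT c i t). reflexivity.
  - intros c i j Hij Hi Hj.
    set (T := fun y => F y /\ (y = mkE c i true \/ y = mkE c j true \/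
                               exists k, i <= k < j /\ y = mkE c k false)).
    assert (HT : Lf n T).
    { apply HF. intros y [Hy _]; auto.
      exists (mkE c i true :: mkE c j true :: map (fun k => mkE c k false) (seq i (j - i))).
      intros y [_ [Hy|[Hy|[k [Hk Hy]]]]]; subst.
      - left; auto.
      - right; left; auto.
      - right; right. apply in_map_iff. exists k. split; auto. apply in_seq. lia. }
    destruct (proj1 (proj2 HT) c i j Hij) as [k [Hk Hn]].
    + split; auto.
    + split; auto.
    + exists k. split; auto. intro H. apply Hn. split; auto. right; right. eauto.
Qed.

Lemma list_bound (l : list El) : exists N, forall x, In x l -> idx x < N.
Proof.
  induction l as [|a l [N HN]].
  - exists 0. intros x [].
  - exists (Nat.max (S (idx a)) N). intros x [H|H].
    + subst. lia.
    + specialize (HN x H). lia.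
Qed.

Lemma La_to_fin n F : L0 n F -> La F -> fin_indep (Lf n) F.
Proof.
  intros H0 Ha T HTF [l Hl]. split; [|split].
  - intros c i t H. eauto.
  - intros c i j Hij Hi Hj. destruct (Ha c i j Hij (HTF _ Hi) (HTF _ Hj)) as [k [Hk Hn]].
    exists k. split; auto.
  - intros c i Hi. destruct (list_bound l) as [N HN]. exists (N + i). split; [lia|].
    intro H. specialize (HN _ (Hl _ H)). simpl in HN. lia.
Qed.

Section Spec.
Variable n : nat.
Variables F B : El -> Prop.
Hypothesis HF : maximal_in (fin_indep (Lf n)) F.
Hypothesis HB : maximal_in (Lf n) B.
Hypothesis HBF : subset B F.

Lemma diff_shape x : F x -> ~ B x -> exists c i,
  (forall y, (y = mkE c i true \/ exists k, i <= k /\ y = mkE c k false) -> add B x y) /\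
  (x = mkE c i true \/ exists k, i <= k /\ x = mkE c k false).
Proof.
  intros Hx Hnx.
  destruct (fin_to_La n F (proj1 HF)) as [F0 Fa].
  assert (HnL : ~ Lf n (add B x)).
  { intro HL. apply Hnx. apply (proj2 HB _ HL); [intros y Hy; left; auto | right; auto]. }
  assert (Hsub : forall y, add B x y -> F y) by (intros y [Hy|Hy]; [apply HBF; auto| subst; auto]).
  assert (HnLb : ~ Lb (add B x)).
  { intro Hb. apply HnL. split; [|split]; auto.
    - intros c i t H. eauto.
    - intros c i j Hij Hi Hj. destruct (Fa c i j Hij (Hsub _ Hi) (Hsub _ Hj)) as [k [Hk Hn]].
      exists k. split; auto. }
  assert (Hex : exists c i, add B x (mkE c i true) /\ forall k, i <= k -> add B x (mkE c k false)).
  { apply NNPP; intro Hne. apply HnLb. intros c i Hi. apply NNPP; intro Hne2. apply Hne.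
    exists c, i. split; auto. intros k Hk. apply NNPP; intro. apply Hne2; eauto. }
  destruct Hex as [c [i [Hi Hall]]]. exists c, i. split.
  - intros y [Hy|[k [Hk Hy]]]; subst; auto.
  - apply NNPP; intro Hno. destruct (proj2 (proj2 (proj1 HB)) c i) as [k [Hk Hn]].
    + destruct Hi as [Hi|Hi]; auto. exfalso; apply Hno; left; auto.
    + destruct (Hall k Hk) as [H|H]; auto. apply Hno. right. exists k. split; auto.
Qed.

Lemma diff_unique x y : F x -> ~ B x -> F y -> ~ B y -> comp x = comp y -> x = y.
Proof.
  intros Hx Hnx Hy Hny Hc.
  destruct (fin_to_La n F (proj1 HF)) as [F0 Fa].
  assert (Hsub : forall z w, F z -> add B z w -> F w) by (intros z w Hz [Hw|Hw]; [apply HBF; auto| subst; auto]).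
  destruct (diff_shape x Hx Hnx) as [c1 [i1 [Hs1 Hx1]]].
  destruct (diff_shape y Hy Hny) as [c2 [i2 [Hs2 Hy2]]].
  assert (c1 = c2).
  { destruct Hx1 as [Hx1|[k1 [_ Hx1]]]; destruct Hy2 as [Hy2|[k2 [_ Hy2]]]; subst; simpl in Hc; auto. }
  subst c2.
  assert (i1 = i2).
  { destruct (lt_eq_lt_dec i1 i2) as [[Hlt|Heq]|Hlt]; auto; exfalso.
    - destruct (Fa c1 i1 i2 Hlt (Hsub x _ Hx (Hs1 _ (or_introl eq_refl)))
                  (Hsub y _ Hy (Hs2 _ (or_introl eq_refl)))) as [k [Hk Hn]].
      apply Hn. apply (Hsub x _ Hx). apply Hs1. right. exists k. split; auto; lia.
    - destruct (Fa c1 i2 i1 Hlt (Hsub y _ Hy (Hs2 _ (or_introl eq_refl)))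
                  (Hsub x _ Hx (Hs1 _ (or_introl eq_refl)))) as [k [Hk Hn]].
      apply Hn. apply (Hsub y _ Hy). apply Hs2. right. exists k. split; auto; lia. }
  subst i2.
  destruct (Hs1 y Hy2) as [H|H]; [contradiction | auto].
Qed.

Lemma finite_diff_m : forall m, exists l : list El, length l <= m /\
  forall x, F x -> ~ B x -> comp x < m -> In x l.
Proof.
  induction m as [|m [l [Hlen Hl]]].
  - exists []. split; auto. intros x _ _ H; lia.
  - destruct (classic (exists x, F x /\ ~ B x /\ comp x = m)) as [[x [Hx [Hnx Hcx]]]|Hne].
    + exists (x :: l). split; [simpl; lia|]. intros y Hy Hny Hcy.
      destruct (Nat.eq_dec (comp y) m).
      * left. apply diff_unique; auto. congruence.
      * right. apply Hl; auto; lia.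
    + exists l. split; [lia|]. intros y Hy Hny Hcy.
      destruct (Nat.eq_dec (comp y) m).
      * exfalso. apply Hne. eauto.
      * apply Hl; auto; lia.
Qed.

Lemma finite_diff : exists l : list El, length l <= n /\
  forall x, F x -> ~ B x -> In x l.
Proof.
  destruct (finite_diff_m n) as [l [Hlen Hl]]. exists l. split; auto.
  intros x Hx Hnx. apply Hl; auto.
  destruct (fin_to_La n F (proj1 HF)) as [F0 _]. destruct x as [c i t]. apply (F0 c i t Hx).
Qed.

End Spec.

Lemma realize n k : k <= n -> exists F B, maximal_in (fin_indep (Lf n)) F /\
  maximal_in (Lf n) B /\ subset B F /\ has_card (setminus F B) k.
Proof.
  intros Hkn.
  exists (fun x => match x with mkE c i t => c < n /\ (if t then (c < k -> i = 0) else c < k) end).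
  exists (fun x => match x with mkE c i t => c < n /\ (if t then k <= c else c < k) end).
  split; [|split; [|split]].
  - split.
    + apply La_to_fin.
      * intros c i t [H _]; auto.
      * intros c i j Hij [_ Hi] [_ Hj]. destruct (lt_dec c k).
        -- specialize (Hi l). specialize (Hj l). lia.
        -- exists i. split; [lia|]. intros [_ H]. contradiction.
    + intros G HG HFG [c i t] Hx. destruct (fin_to_La n G HG) as [G0 Ga].
      pose proof (G0 c i t Hx) as Hc. split; auto. destruct t.
      * intro Hck. destruct i as [|i]; auto. exfalso.
        destruct (Ga c 0 (S i) ltac:(lia) (HFG (mkE c 0 true) (conj Hc (fun _ => eq_refl))) Hx)
          as [m [Hm Hn]].
        apply Hn. apply HFG. split; auto.
      * destruct (lt_dec c k); auto. exfalso.
        assert (H1 : c < k -> i = 0) by lia. assert (H2 : c < k -> S i = 0) by lia.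
        destruct (Ga c i (S i) ltac:(lia) (HFG (mkE c i true) (conj Hc H1))
                    (HFG (mkE c (S i) true) (conj Hc H2))) as [m [Hm Hn]].
        replace m with i in Hn by lia. contradiction.
  - split.
    + split; [|split].
      * intros c i t [H _]; auto.
      * intros c i j Hij [_ Hi] [_ Hj]. exists i. split; [lia|]. intros [_ H]. lia.
      * intros c i [_ Hi]. exists i. split; [lia|]. intros [_ H]. lia.
    + intros Y [Y0 [Ya Yb]] HBY [c i t] Hy. pose proof (Y0 c i t Hy) as Hc. split; auto.
      destruct t.
      * destruct (le_lt_dec k c); auto. exfalso.
        destruct (Yb c i Hy) as [m [Hm Hn]]. apply Hn. apply HBY. split; auto.
      * destruct (lt_dec c k); auto. exfalso.
        assert (H1 : k <= c) by lia.
        destruct (Ya c i (S i) ltac:(lia) (HBY (mkE c i true) (conj Hc H1))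
                    (HBY (mkE c (S i) true) (conj Hc H1))) as [m [Hm Hn]].
        replace m with i in Hn by lia. contradiction.
  - intros [c i t] [H1 H2]. split; auto. destruct t; [intro; lia | auto].
  - exists (map (fun c => mkE c 0 true) (seq 0 k)). split; [|split].
    + apply Injective_map_NoDup; [|apply seq_NoDup]. intros a b H. injection H; auto.
    + rewrite length_map, length_seq. reflexivity.
    + intros [c i t]. unfold setminus. split.
      * intros [[H1 H2] H3]. destruct t.
        -- assert (c < k) by (destruct (lt_dec c k); auto; exfalso; apply H3; split; [auto|lia]).
           rewrite (H2 H). apply in_map_iff. exists c. split; auto. apply in_seq. lia.
        -- exfalso. apply H3. split; auto.
      * intros Hin. apply in_map_iff in Hin. destruct Hin as [c' [Heq Hin]].
        injection Heq; intros; subst. apply in_seq in Hin. split.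
        -- split; [lia|]. auto.
        -- intros [_ H]. lia.
Qed.

Theorem theorem3p2p1 :
  forall n : nat, 0 < n ->
  exists (E : Type) (L : (E -> Prop) -> Prop),
    is_matroid L /\ nearly_finitary L /\
    exists s : list (option nat),
      NoDup s /\ n <= length s /\ (forall v, spec L v <-> In v s).
Proof.
  intros n _. exists El, (Lf n). split; [apply fan_matroid|split].
  - intros F B HF HB HBF. destruct (finite_diff n F B HF HB HBF) as [l [_ Hl]].
    exists l. intros x [Hx Hnx]. auto.
  - exists (map Some (seq 0 (S n))). split; [|split].
    + apply Injective_map_NoDup; [|apply seq_NoDup]. intros a b H. injection H; auto.
    + rewrite length_map, length_seq. lia.
    + intros [k|]; split.
      * intros [F [B [HF [HB [HBF [l [Hnd [Hlen Hiff]]]]]]]].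
        destruct (finite_diff n F B HF HB HBF) as [l' [Hl' Hin]].
        assert (length l <= length l').
        { apply NoDup_incl_length; auto. intros x Hx. apply Hiff in Hx. destruct Hx. auto. }
        apply in_map_iff. exists k. split; auto. apply in_seq. lia.
      * intros Hin. apply in_map_iff in Hin. destruct Hin as [k' [Heq Hin]].
        injection Heq; intros; subst. apply in_seq in Hin.
        destruct (realize n k ltac:(lia)) as [F [B [H1 [H2 [H3 H4]]]]].
        exists F, B. auto.
      * intros [F [B [HF [HB [HBF Hnf]]]]]. exfalso. apply Hnf.
        destruct (finite_diff n F B HF HB HBF) as [l [_ Hl]].
        exists l. intros x [Hx Hnx]. auto.
      * intros Hin. apply in_map_iff in Hin. destruct Hin as [k' [Heq _]]. discriminate.
Qed.
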